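(* Let $f:\mathbb{R}^n\to\mathbb{R}$ be locally Lipschitz continuous and bounded below, let $x^0\in\mathbb{R}^n$ be such that the level set $\mathrm{lev}_{x^0}f=\{x\in\mathbb{R}^n : f(x)\le f(x^0)\}$ is bounded, and suppose $f$ is prox-regular at every point of $\mathrm{lev}_{x^0}f$. For $x\in\mathbb{R}^n$ and $a\ge 0$ let $g(y;x,a)=f(y)+\frac{a}{2}\|y-x\|_2^2$. Then there exists a number $\bar a\ge 0$ such that for every $a\ge \bar a$, every $x\in\mathbb{R}^n$ and every $y\in\mathrm{lev}_{x^0}f$, the function $g(\cdot;x,a)$ is convex on a neighborhood of $y$.
   Context: $\partial f(\bar x)$ denotes the basic (limiting) subdifferential: the set of limits of Fréchet subgradients $s_j\in\hat\partial f(x_j)$ with $x_j\to\bar x$, $f(x_j)\to f(\bar x)$, where $s\in\hat\partial f(x)$ means $\liminf_{x'\to x, x'\neq x}\frac{f(x')-f(x)-\langle s,x'-x\rangle}{\|x'-x\|}\ge 0$. A function $f$ is prox-regular at $\bar x$ for $\bar v\in\partial f(\bar x)$ if $f$ is finite and locally lower semicontinuous at $\bar x$ and there exist $\epsilon>0$ and $a\ge0$ such that $f(x')\ge f(x)+\langle v,x'-x\rangle-\frac a2\|x'-x\|^2$ for all $x'\in B(\bar x,\epsilon)$ whenever $\|x-\bar x\|<\epsilon$, $v\in\partial f(x)$, $\|v-\bar v\|<\epsilon$, $f(x)<f(\bar x)+\epsilon$; $f$ is prox-regular at $\bar x$ if this holds for every $\bar v\in\partial f(\bar x)$. *)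

(* Defs.v *)
From HB Require Import structures.
From mathcomp Require Import all_boot all_order all_algebra.
From mathcomp Require Import reals.
Set Implicit Arguments. Unset Strict Implicit. Unset Printing Implicit Defensive.
Import Order.TTheory GRing.Theory Num.Theory.
Local Open Scope ring_scope.

Section Defs.
Variables (R : realType) (n : nat).
Local Notation vec := 'rV[R]_n.

Definition dotv (x y : vec) : R := \sum_(i < n) x 0 i * y 0 i.
Definition norm2 (x : vec) : R := Num.sqrt (dotv x x).

(* Frechet subgradient: liminf_{x'->x, x'<>x} (f x' - f x - <s,x'-x>)/|x'-x| >= 0,
   unfolded with epsilon-delta. *)
Definition frechet_subgrad (f : vec -> R) (x s : vec) : Prop :=
  forall eps : R, 0 < eps -> exists2 del : R, 0 < del &
    forall x' : vec, 0 < norm2 (x' - x) -> norm2 (x' - x) < del ->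
      - eps * norm2 (x' - x) <= f x' - f x - dotv s (x' - x).

Definition limiting_subgrad (f : vec -> R) (x s : vec) : Prop :=
  exists (xs ss : nat -> vec),
    (forall j, frechet_subgrad f (xs j) (ss j)) /\
    (forall e : R, 0 < e -> exists N, forall j, (N <= j)%N ->
        [/\ norm2 (xs j - x) < e, `|f (xs j) - f x| < e & norm2 (ss j - s) < e]).

Definition locally_lsc (f : vec -> R) (xbar : vec) : Prop :=
  exists2 r : R, 0 < r & forall x : vec, norm2 (x - xbar) < r ->
    forall e : R, 0 < e -> exists2 d : R, 0 < d &
      forall y : vec, norm2 (y - x) < d -> f x - e < f y.

Definition prox_regular_at_for (f : vec -> R) (xbar vbar : vec) : Prop :=
  locally_lsc f xbar /\
  exists eps a : R, [/\ 0 < eps, 0 <= a &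
    forall (x v : vec), norm2 (x - xbar) < eps -> limiting_subgrad f x v ->
      norm2 (v - vbar) < eps -> f x < f xbar + eps ->
      forall x' : vec, norm2 (x' - xbar) < eps ->
        f x + dotv v (x' - x) - a / 2 * (norm2 (x' - x)) ^+ 2 <= f x'].

Definition prox_regular_at (f : vec -> R) (xbar : vec) : Prop :=
  locally_lsc f xbar /\
  forall vbar : vec, limiting_subgrad f xbar vbar -> prox_regular_at_for f xbar vbar.

Definition locally_lipschitz (f : vec -> R) : Prop :=
  forall x : vec, exists2 del : R, 0 < del & exists L : R,
    forall y z : vec, norm2 (y - x) < del -> norm2 (z - x) < del ->
      `|f y - f z| <= L * norm2 (y - z).

Definition convex_near (g : vec -> R) (y : vec) : Prop :=
  exists2 r : R, 0 < r & forall (u w : vec) (t : R),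
    norm2 (u - y) < r -> norm2 (w - y) < r -> 0 <= t -> t <= 1 ->
    g (t *: u + (1 - t) *: w) <= t * g u + (1 - t) * g w.

Definition gfun (f : vec -> R) (x : vec) (a : R) (y : vec) : R :=
  f y + a / 2 * (norm2 (y - x)) ^+ 2.

End Defs.

(* Main.v *)
Require Import Defs.
From HB Require Import structures.
From mathcomp Require Import all_boot all_order all_algebra.
From mathcomp Require Import reals ring lra.
From mathcomp Require Import classical_sets boolp topology normedtype sequences.
Require Import Defs.
Import Order.TTheory GRing.Theory Num.Theory numFieldNormedType.Exports.
Local Open Scope ring_scope.
Set Implicit Arguments. Unset Strict Implicit.


Section Alg.
Variables (R : realType) (n : nat).
Local Notation vec := 'rV[R]_n.
Implicit Types x y z : vec.

Lemma dotvC x y : dotv x y = dotv y x.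
Proof. by apply: eq_bigr => i _; rewrite mulrC. Qed.
Lemma dotvDl x y z : dotv (x + y) z = dotv x z + dotv y z.
Proof. by rewrite /dotv -big_split; apply: eq_bigr => i _; rewrite !mxE mulrDl. Qed.
Lemma dotvZl (c : R) x y : dotv (c *: x) y = c * dotv x y.
Proof. by rewrite /dotv mulr_sumr; apply: eq_bigr => i _; rewrite !mxE mulrA. Qed.
Lemma dotvNl x y : dotv (- x) y = - dotv x y.
Proof. by rewrite -scaleN1r dotvZl mulN1r. Qed.
Lemma dotvBl x y z : dotv (x - y) z = dotv x z - dotv y z.
Proof. by rewrite dotvDl dotvNl. Qed.
Lemma dotvDr x y z : dotv x (y + z) = dotv x y + dotv x z.
Proof. by rewrite dotvC dotvDl !(dotvC x). Qed.
Lemma dotvZr (c : R) x y : dotv x (c *: y) = c * dotv x y.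
Proof. by rewrite dotvC dotvZl dotvC. Qed.
Lemma dotvNr x y : dotv x (- y) = - dotv x y.
Proof. by rewrite dotvC dotvNl dotvC. Qed.
Lemma dotvBr x y z : dotv x (y - z) = dotv x y - dotv x z.
Proof. by rewrite dotvDr dotvNr. Qed.
Lemma dotv0l x : dotv 0 x = 0.
Proof. by rewrite /dotv big1 // => i _; rewrite mxE mul0r. Qed.
Lemma dotv0r x : dotv x 0 = 0.
Proof. by rewrite dotvC dotv0l. Qed.
Lemma dotv_ge0 x : 0 <= dotv x x.
Proof. by apply: sumr_ge0 => i _; rewrite -expr2 sqr_ge0. Qed.
Lemma norm2_ge0 x : 0 <= norm2 x.
Proof. exact: sqrtr_ge0. Qed.
Lemma sqr_norm2 x : norm2 x ^+ 2 = dotv x x.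
Proof. by rewrite sqr_sqrtr // dotv_ge0. Qed.
Lemma dotv_eq0 x : dotv x x = 0 -> forall i, x 0 i = 0.
Proof.
move=> h i.
have nn : forall j, predT j -> 0 <= x 0 j * x 0 j by move=> j _; rewrite -expr2 sqr_ge0.
have := @psumr_eq0P _ _ predT (fun j => x 0 j * x 0 j) nn h i isT.
by rewrite -expr2 => /eqP; rewrite sqrf_eq0 => /eqP.
Qed.

Lemma dotv_expand x y (t : R) :
  dotv (x - t *: y) (x - t *: y) = dotv x x - 2 * t * dotv x y + t ^+ 2 * dotv y y.
Proof. rewrite dotvBl !dotvBr !dotvZl !dotvZr (dotvC y x); ring. Qed.

Lemma CS2 x y : dotv x y ^+ 2 <= dotv x x * dotv y y.
Proof.
have [Y0|Yp] := eqVneq (dotv y y) 0.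
  have -> : dotv x y = 0.
    by rewrite /dotv big1 // => i _; rewrite (dotv_eq0 Y0) mulr0.
  by rewrite Y0 expr0n /= mulr0.
have Ypos : 0 < dotv y y by rewrite lt_def Yp dotv_ge0.
set t := dotv x y / dotv y y.
have htY : t * dotv y y = dotv x y by rewrite /t divfK.
have := dotv_ge0 (x - t *: y); rewrite dotv_expand.
move: htY Ypos; set X := dotv x x; set Y := dotv y y; set D := dotv x y.
move=> htY Ypos h; nra.
Qed.

Lemma CS x y : `|dotv x y| <= norm2 x * norm2 y.
Proof.
have := CS2 x y; rewrite -!sqr_norm2.
have := norm2_ge0 x; have := norm2_ge0 y; have := normr_ge0 (dotv x y).
rewrite -(real_normK (num_real (dotv x y))).
set a := `|_|; set p := norm2 x; set q := norm2 y => ha hq hp h.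
rewrite -(@ler_pXn2r _ 2) ?inE ?nnegrE ?mulr_ge0 // exprMn.
exact: h.
Qed.

Lemma sqr_norm2D x y : norm2 (x + y) ^+ 2 = norm2 x ^+ 2 + 2 * dotv x y + norm2 y ^+ 2.
Proof. rewrite !sqr_norm2 dotvDl !dotvDr (dotvC y x); ring. Qed.

Lemma norm2D x y : norm2 (x + y) <= norm2 x + norm2 y.
Proof.
have h := sqr_norm2D x y.
have := CS x y; have := ler_norm (dotv x y).
have := norm2_ge0 x; have := norm2_ge0 y; have := norm2_ge0 (x + y).
move: h; set a := norm2 (x + y); set p := norm2 x; set q := norm2 y; set D := dotv x y.
move=> h ha hq hp hD hc; nra.
Qed.

Lemma norm2Z (c : R) x : norm2 (c *: x) = `|c| * norm2 x.
Proof.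
by rewrite /norm2 dotvZl dotvZr mulrA -expr2 sqrtrM ?sqr_ge0 // sqrtr_sqr.
Qed.

Lemma norm2N x : norm2 (- x) = norm2 x.
Proof. by rewrite -scaleN1r norm2Z normrN1 mul1r. Qed.

Lemma norm2_sym x y : norm2 (x - y) = norm2 (y - x).
Proof. by rewrite -norm2N opprB. Qed.

Lemma norm20 : norm2 (0 : vec) = 0.
Proof. by rewrite /norm2 dotv0l sqrtr0. Qed.

Lemma norm2_tri x y z : norm2 (x - z) <= norm2 (x - y) + norm2 (y - z).
Proof. by have := norm2D (x - y) (y - z); rewrite addrA subrK. Qed.

Lemma coord_le x i : `|x 0 i| <= norm2 x.
Proof.
rewrite -(sqrtr_sqr (x 0 i)) ler_sqrt; last exact: dotv_ge0.
rewrite /dotv (bigD1 i) //= expr2 lerDl.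
by apply: sumr_ge0 => j _; rewrite -expr2 sqr_ge0.
Qed.

Lemma norm2_lt x (e : R) : 0 < e -> (norm2 x < e) = (dotv x x < e ^+ 2).
Proof. by move=> e0; rewrite -sqr_norm2 ltr_pXn2r ?inE ?nnegrE ?norm2_ge0 ?ltW. Qed.

Lemma norm2_le x (e : R) : 0 <= e -> (norm2 x <= e) = (dotv x x <= e ^+ 2).
Proof. by move=> e0; rewrite -sqr_norm2 ler_pXn2r ?inE ?nnegrE ?norm2_ge0. Qed.

Lemma dotv_le x y : dotv x y <= norm2 x * norm2 y.
Proof. exact: le_trans (ler_norm _) (CS x y). Qed.
Lemma dotv_ge x y : - (norm2 x * norm2 y) <= dotv x y.
Proof. have := CS x y; have := ler_norm (- dotv x y); rewrite normrN; lra. Qed.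

End Alg.


Lemma rBW (R : realType) (u : nat -> R) (M : R) : (forall j, `|u j| <= M) ->
  exists phi : nat -> nat, (forall j, (phi j < phi j.+1)%N) /\ exists l : R,
   forall e, 0 < e -> exists N, forall j, (N <= j)%N -> `|u (phi j) - l| < e.
Proof.
move=> hM.
have bu : bounded_fun u.
  exists M; split; first by rewrite num_real.
  move=> x Mx y _; apply: le_trans (hM y) (ltW Mx).
have [phi iphi cphi] := bolzano_weierstrass bu.
exists phi; split.
  by move=> j; rewrite ltnNge; have := iphi j.+1 j; rewrite leEnat => ->; rewrite ltnn.
have [l hl] := (cvg_ex _).1 cphi.
exists l => e e0.
have := (cvgrPdistC_lt _ _).1 hl e e0.
case => N _ HN; exists N => j Nj; exact: HN.
Qed.

Definition incr (phi : nat -> nat) := forall j, (phi j < phi j.+1)%N.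

Lemma incr_mono phi : incr phi -> forall i j, (i <= j)%N -> (phi i <= phi j)%N.
Proof.
move=> h i j /subnK <-; elim: (j - i)%N => [|k IH] //=.
by rewrite addSn; apply: leq_trans IH (ltnW (h _)).
Qed.

Lemma incr_ge phi : incr phi -> forall j, (j <= phi j)%N.
Proof. move=> h; elim=> [|j IH] //; exact: leq_ltn_trans IH (h j). Qed.

Lemma incr_comp phi psi : incr phi -> incr psi -> incr (phi \o psi).
Proof.
move=> hp hq j; rewrite /comp.
exact: leq_trans (hp _) (incr_mono hp (hq j)).
Qed.

Section Seq.
Variables (R : realType) (n : nat).
Local Notation vec := 'rV[R]_n.

Definition rconv (u : nat -> R) (l : R) :=
  forall e, 0 < e -> exists N, forall j, (N <= j)%N -> `|u j - l| < e.
Definition vconv (u : nat -> vec) (l : vec) :=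
  forall e, 0 < e -> exists N, forall j, (N <= j)%N -> norm2 (u j - l) < e.

Lemma rconv_sub u l phi : incr phi -> rconv u l -> rconv (u \o phi) l.
Proof.
move=> hp h e e0; have [N hN] := h e e0; exists N => j Nj /=.
apply: hN; exact: leq_trans Nj (incr_ge hp j).
Qed.

Lemma vconv_sub u l phi : incr phi -> vconv u l -> vconv (u \o phi) l.
Proof.
move=> hp h e e0; have [N hN] := h e e0; exists N => j Nj /=.
apply: hN; exact: leq_trans Nj (incr_ge hp j).
Qed.

Lemma vBW (u : nat -> vec) (M : R) : (forall j, norm2 (u j) <= M) ->
  exists phi, incr phi /\ exists l, vconv (u \o phi) l.
Proof.
move=> hM.
have key : forall k, exists phi, incr phi /\ forall i : 'I_n, (i < k)%N ->
    exists l, rconv (fun j => u (phi j) 0 i) l.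
  elim=> [|k [phi [iphi hphi]]].
    by exists id; split => // j /=.
  have [hk|hk] := ltnP k n; last first.
    exists phi; split => // i _; apply: hphi; exact: leq_trans (ltn_ord i) hk.
  pose i0 := Ordinal hk.
  have [psi [ipsi [l hl]]] := @rBW R (fun j => u (phi j) 0 i0) M
     (fun j => le_trans (coord_le _ _) (hM _)).
  exists (phi \o psi); split; first exact: incr_comp.
  move=> i; rewrite ltnS leq_eqVlt => /orP [/eqP ei|lik].
    have -> : i = i0 by apply: val_inj.
    by exists l.
  have [l' hl'] := hphi i lik; exists l'.
  exact: (rconv_sub (u := fun j => u (phi j) 0 i)).
have [phi [iphi hphi]] := key n.
have [L hL] : {L : 'I_n -> R & forall i, rconv (fun j => u (phi j) 0 i) (L i)}.
  exact: (@choice _ _ (fun i l => rconv (fun j => u (phi j) 0 i) l) (fun i => hphi i (ltn_ord i))).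
exists phi; split => //; exists (\row_i L i) => e e0.
pose e' := e / (n%:R + 1).
have e'0 : 0 < e' by rewrite divr_gt0 // ltr_wpDl.
have [Ns hNs] : {Ns : 'I_n -> nat & forall i j, (Ns i <= j)%N ->
  `|u (phi j) 0 i - L i| < e'}.
  exact: (@choice _ _ (fun i N => forall j, (N <= j)%N ->
  `|u (phi j) 0 i - L i| < e') (fun i => hL i e' e'0)).
exists (\max_(i < n) Ns i)%N => j Nj /=.
rewrite norm2_lt //.
have le1 : dotv (u (phi j) - \row_i L i) (u (phi j) - \row_i L i) <= e' ^+ 2 *+ n.
  rewrite /dotv -[n in _ *+ n]card_ord -sumr_const.
  apply: ler_sum => i _; rewrite !mxE -expr2 -real_normK ?num_real //.
  rewrite ler_pXn2r ?inE ?nnegrE ?normr_ge0 ?ltW //; apply: hNs.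
  exact: leq_trans (leq_bigmax _) Nj.
apply: le_lt_trans le1 _.
have he : e' * (n%:R + 1) = e by rewrite /e' divfK // gt_eqF // ltr_wpDl.
rewrite -mulr_natr.
have : (0 : R) <= n%:R by [].
move: he e'0; set m := (n%:R : R) => he e'0 hm.
rewrite -he; nra.
Qed.

End Seq.


Section D.
Variables (R : realType) (n : nat).
Local Notation vec := 'rV[R]_n.

Lemma archi1 (e : R) : 0 < e -> exists N : nat, forall j, (N <= j)%N -> 1 / (j%:R + 1) < e.
Proof.
move=> e0; exists (Num.Def.archi_bound (1 / e)) => j hj.
have h := archi_boundP (ltW (divr_gt0 ltr01 e0) : 0 <= 1 / e).
have h3 : (Num.Def.archi_bound (1 / e))%:R <= (j%:R : R) by rewrite ler_nat.
have h2 : 1 / e < j%:R + 1 by lra.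
have jp : (0 : R) < j%:R + 1 by rewrite ltr_wpDl.
move: h2; rewrite ltr_pdivrMr // => h2.
by rewrite ltr_pdivrMr // mulrC.
Qed.

Lemma archi2 (c : R) : exists N : nat, forall j, (N <= j)%N -> c <= j%:R.
Proof.
exists (Num.Def.archi_bound `|c|) => j hj.
have h := archi_boundP (normr_ge0 c).
apply: le_trans (ler_norm c) _; apply: le_trans (ltW h) _; by rewrite ler_nat.
Qed.

Lemma lip_nonneg (f : vec -> R) : locally_lipschitz f -> forall p : vec,
  exists2 del : R, 0 < del & exists2 L : R, 0 <= L &
    forall y z : vec, norm2 (y - p) < del -> norm2 (z - p) < del ->
      `|f y - f z| <= L * norm2 (y - z).
Proof.
move=> hf p; have [del d0 [L hL]] := hf p; exists del => //; exists `|L| => // y z hy hz.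
apply: le_trans (hL y z hy hz) _; apply: ler_wpM2r; [exact: norm2_ge0|exact: ler_norm].
Qed.

Lemma fcont (f : vec -> R) : locally_lipschitz f -> forall (x : vec) (e : R), 0 < e ->
  exists2 d : R, 0 < d & forall y, norm2 (y - x) < d -> `|f y - f x| < e.
Proof.
move=> hf x e e0; have [del d0 [L L0 hL]] := lip_nonneg hf x.
exists (Num.min del (e / (L + 1))).
  by rewrite lt_min d0 divr_gt0 // ltr_wpDl.
move=> y; rewrite lt_min => /andP [h1 h2].
have hx : norm2 (x - x) < del by rewrite subrr norm20.
apply: le_lt_trans (hL y x h1 hx) _.
have := norm2_ge0 (y - x); move: h2; rewrite ltr_pdivlMr ?ltr_wpDl //.
set d := norm2 (y - x) => h2 hd; nra.
Qed.

Lemma rev_tri (a b : vec) : `|norm2 a - norm2 b| <= norm2 (a - b).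
Proof.
have h1 := norm2_tri a b 0; have h2 := norm2_tri b a 0.
rewrite !subr0 in h1 h2; rewrite (norm2_sym b a) in h2.
by rewrite ler_norml; apply/andP; split; lra.
Qed.

End D.


Lemma two_gt0 (R : realType) : (0 : R) < 2. Proof. lra. Qed.

Section E.
Local Open Scope classical_set_scope.
Variables (R : realType) (n : nat).
Local Notation vec := 'rV[R]_n.

Lemma dense_frechet (f : vec -> R) (m : R) (p : vec) (del L : R) :
  (forall x, m <= f x) -> 0 < del -> 0 <= L ->
  (forall y z : vec, norm2 (y - p) < del -> norm2 (z - p) < del ->
      `|f y - f z| <= L * norm2 (y - z)) ->
  forall z : vec, norm2 (z - p) < del / 2 -> forall eta : R, 0 < eta ->
  exists y v : vec, [/\ norm2 (y - z) < eta, frechet_subgrad f y v & norm2 v <= 2 * L].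
Proof.
move=> hm d0 L0 hL z hz eta eta0.
set rho := Num.min eta (del / 2) / 2.
have rho0 : 0 < rho by rewrite divr_gt0 // lt_min eta0 divr_gt0.
have rhoeta : rho < eta.
  have : Num.min eta (del / 2) <= eta by rewrite ge_min lexx.
  rewrite /rho; lra.
have rhodel : rho <= del / 4.
  have : Num.min eta (del / 2) <= del / 2 by rewrite ge_min lexx orbT.
  rewrite /rho; lra.
have inball : forall y, norm2 (y - z) <= rho -> norm2 (y - p) < del.
  move=> y hy; have := norm2_tri y z p; lra.
have zin : norm2 (z - p) < del by lra.
set k := (2 * L + 1) / rho.
have k0 : 0 < k by rewrite divr_gt0 // ltr_wpDl // mulr_ge0.
have krho : k * rho = 2 * L + 1 by rewrite /k divfK // gt_eqF.
set phi := fun y => f y + k * norm2 (y - z) ^+ 2.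
set E := [set r | exists y, norm2 (y - z) <= rho /\ r = phi y].
have hE : has_inf E.
  split; first by exists (phi z); exists z; split => //; rewrite subrr norm20 ltW.
  exists m => r [y [_ ->]]; rewrite /phi; apply: le_trans (hm y) _.
  by rewrite lerDl; apply: mulr_ge0; [exact: ltW|exact: sqr_ge0].
have lb := ge_inf hE.2.
have [ys hys] : {ys : nat -> vec & forall j, norm2 (ys j - z) <= rho /\
    phi (ys j) < inf E + 1 / (j%:R + 1)}.
  apply: (@choice _ _ (fun j y => norm2 (y - z) <= rho /\ phi y < inf E + 1 / (j%:R + 1))).
  move=> j; have [r [y [hy ->]] hr] := inf_adherent (divr_gt0 ltr01 (ltr_wpDl (ler0n _ j) ltr01)) hE.
  by exists y.
have bnd : forall j, norm2 (ys j) <= norm2 z + rho.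
  move=> j; have := norm2_tri (ys j) z 0; rewrite !subr0.
  have := (hys j).1; lra.
have [psi [ipsi [ys' hys']]] := vBW bnd.
have hlim := hys'.
set y0 := ys'.
have y0in : norm2 (y0 - z) <= rho.
  apply/ler_addgt0Pr => e e0; have [N hN] := hys' e e0.
  have h1 := hN N (leqnn N); have h2 := (hys (psi N)).1.
  have h3 := norm2_tri y0 (ys (psi N)) z.
  rewrite (norm2_sym y0 (ys (psi N))) in h3; rewrite /= in h1; lra.
have cont : forall y, norm2 (y - z) <= rho ->
    phi y0 <= phi y + (L + 2 * k * rho) * norm2 (y - y0).
  move=> y hy; rewrite /phi.
  have h1 := hL y0 y (inball _ y0in) (inball _ hy).
  have h2 := ler_norm (f y0 - f y).
  have e1 : (y0 - z) - (y - z) = y0 - y by rewrite opprB addrA subrK.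
  have h3 := rev_tri (y0 - z) (y - z); rewrite e1 in h3.
  have := ler_norm (norm2 (y0 - z) - norm2 (y - z)).
  have := norm2_ge0 (y0 - z); have := norm2_ge0 (y - z); have := norm2_ge0 (y - y0).
  move: h1 h2 h3 y0in hy k0 L0; rewrite (norm2_sym y0 y).
  set a := norm2 (y0 - z); set b := norm2 (y - z); set d := norm2 (y - y0).
  set A := `|_ - _|; set fA := f y0; set fB := f y.
  move=> h1 h2 h3 ha hb k0 L0 hd hb0 ha0 hab.
  have : k * (a ^+ 2 - b ^+ 2) <= k * (d * (2 * rho)).
    apply: ler_wpM2l; first exact: ltW.
    have -> : a ^+ 2 - b ^+ 2 = (a - b) * (a + b) by ring.
    apply: le_trans (ler_norm _) _; rewrite normrM.
    apply: ler_pM; [exact: normr_ge0|exact: normr_ge0|exact: h3|].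
    by rewrite ger0_norm; lra.
  have : fA - fB <= L * d by lra.
  move=> hf hk; nra.
have phimin : phi y0 <= inf E.
  apply/ler_addgt0Pr => e e0.
  set C := L + 2 * k * rho.
  have C0 : 0 <= C by rewrite /C; nra.
  have [N1 hN1] := hys' (e / (2 * (C + 1))) (divr_gt0 e0 (mulr_gt0 (two_gt0 R) (ltr_wpDl C0 ltr01))).
  have [N2 hN2] := archi1 (divr_gt0 e0 (two_gt0 R)).
  set j := maxn N1 N2.
  have h1 := hN1 j (leq_maxl _ _); rewrite /= in h1.
  have h2 := hN2 (psi j) (leq_trans (leq_maxr N1 N2) (incr_ge ipsi j)).
  have [h3 h4] := hys (psi j).
  have h5 := cont _ h3.
  have hC : C * norm2 (ys (psi j) - y0) <= e / 2.
    move: h1; rewrite ltr_pdivlMr ?mulr_gt0 ?ltr_wpDl // => h1.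
    have := norm2_ge0 (ys (psi j) - y0); move: h1; set d := norm2 _ => h1 hd.
    rewrite ler_pdivlMr //; nra.
  rewrite -/C in h5; lra.
have phiz : inf E <= phi z by apply: lb; exists z; split => //; rewrite subrr norm20 ltW.
have phix : forall x, norm2 (x - z) <= rho -> inf E <= phi x.
  by move=> x hx; apply: lb; exists x.
set nn := norm2 (y0 - z).
have nn0 : 0 <= nn := norm2_ge0 _.
have knn : k * nn <= L.
  have h1 : f y0 + k * nn ^+ 2 <= f z.
    by have := le_trans phimin phiz; rewrite /phi subrr norm20 expr0n /= mulr0 addr0.
  have h2 := hL z y0 zin (inball _ y0in); rewrite norm2_sym -/nn in h2.
  have h3 := ler_norm (f z - f y0).
  have h4 : k * nn * nn <= L * nn by rewrite -mulrA -expr2; lra.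
  have [->|nnp] := eqVneq nn 0; first by rewrite mulr0.
  have nnp' : 0 < nn by rewrite lt_def nnp nn0.
  by rewrite -(ler_pM2r nnp').
have nnrho : 2 * nn < rho.
  rewrite -(ltr_pM2l k0) krho; lra.
exists y0, ((2 * k) *: (z - y0)); split.
- rewrite -/nn; lra.
- move=> eps eps0; exists (Num.min (rho / 2) (eps / k)).
    by rewrite lt_min; apply/andP; split; apply: divr_gt0 => //; exact: two_gt0.
  move=> x' hpos; rewrite lt_min => /andP [hr he].
  move: he; rewrite ltr_pdivlMr // => he.
  set d := norm2 (x' - y0) in hpos hr he *.
  have xin : norm2 (x' - z) <= rho.
    have := norm2_tri x' y0 z; rewrite -/d -/nn; lra.
  have hphi := le_trans phimin (phix _ xin).
  rewrite /phi in hphi.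
  have ex : x' - z = (x' - y0) + (y0 - z) by rewrite addrA subrK.
  rewrite ex (sqr_norm2D (x' - y0) (y0 - z)) -/d -/nn in hphi.
  have ev : z - y0 = - (y0 - z) by rewrite opprB.
  rewrite ev dotvZl dotvNl (dotvC (y0 - z)).
  move: hphi; set D := dotv (x' - y0) (y0 - z) => hphi.
  have dd0 : 0 <= d := norm2_ge0 _.
  nra.
- rewrite (norm2Z (2 * k) (z - y0)) norm2_sym -/nn ger0_norm; [rewrite -mulrA; lra | exact: ltW (mulr_gt0 (two_gt0 R) k0)].
Qed.
End E.


Section F.
Variables (R : realType) (n : nat).
Local Notation vec := 'rV[R]_n.

Lemma convex_from_support (G : vec -> R) (p : vec) (r : R) :
  (forall z, norm2 (z - p) < r -> forall e, 0 < e -> exists2 d, 0 < d &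
      forall y, norm2 (y - z) < d -> `|G y - G z| < e) ->
  (forall z, norm2 (z - p) < r -> forall eta, 0 < eta -> exists y s,
      [/\ norm2 (y - z) < eta, norm2 (y - p) < r &
        forall x', norm2 (x' - p) < r -> G y + dotv s (x' - y) <= G x']) ->
  forall u w t, norm2 (u - p) < r -> norm2 (w - p) < r -> 0 <= t -> t <= 1 ->
    G (t *: u + (1 - t) *: w) <= t * G u + (1 - t) * G w.
Proof.
move=> hc hs u w t hu hw t0 t1.
set z := t *: u + (1 - t) *: w.
have hz : norm2 (z - p) < r.
  have ez : z - p = t *: (u - p) + (1 - t) *: (w - p).
    by apply/rowP => i; rewrite !mxE; ring.
  rewrite ez; apply: le_lt_trans (norm2D _ _) _.
  rewrite !norm2Z !ger0_norm //; last by lra.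
  have k2 : (1 - t) * norm2 (w - p) <= (1 - t) * r by apply: ler_wpM2l; lra.
  have [->|tp] := eqVneq t 0; first by rewrite mul0r add0r subr0 mul1r.
  have tp' : 0 < t by rewrite lt_def tp t0.
  have k1 : t * norm2 (u - p) < t * r by rewrite ltr_pM2l.
  lra.
apply/ler_addgt0Pr => e e0.
set eps := e / 3.
have eps0 : 0 < eps by rewrite divr_gt0 //; lra.
have [du du0 hdu] := hc u hu eps eps0.
have [dw dw0 hdw] := hc w hw eps eps0.
have [dz dz0 hdz] := hc z hz eps eps0.
set eta := Num.min (Num.min du dw) (Num.min dz (Num.min (r - norm2 (u - p)) (r - norm2 (w - p)))).
have eta0 : 0 < eta by rewrite !lt_min du0 dw0 dz0 !subr_gt0 hu hw.
have [y [s [hyz hyp hsup]]] := hs z hz eta eta0.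
move: hyz; rewrite !lt_min => /andP [/andP [hdu' hdw'] /andP [hdz' /andP [hur hwr]]].
set u' := u + (y - z); set w' := w + (y - z).
have eu : u' - u = y - z by apply/rowP => i; rewrite !mxE; ring.
have ew : w' - w = y - z by apply/rowP => i; rewrite !mxE; ring.
have eu2 : u' - y = u - z by apply/rowP => i; rewrite !mxE; ring.
have ew2 : w' - y = w - z by apply/rowP => i; rewrite !mxE; ring.
have hu' : norm2 (u' - p) < r.
  have := norm2_tri u' u p; rewrite eu; lra.
have hw' : norm2 (w' - p) < r.
  have := norm2_tri w' w p; rewrite ew; lra.
have h1 := hsup _ hu'; have h2 := hsup _ hw'.
rewrite eu2 in h1; rewrite ew2 in h2.
have hdot : t * dotv s (u - z) + (1 - t) * dotv s (w - z) = 0.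
  rewrite -!dotvZr -dotvDr.
  have -> : t *: (u - z) + (1 - t) *: (w - z) = 0 by apply/rowP => i; rewrite !mxE; ring.
  by rewrite dotv0r.
have gu := hdu u'; rewrite eu in gu; have {gu} gu := gu hdu'.
have gw := hdw w'; rewrite ew in gw; have {gw} gw := gw hdw'.
have gz := hdz y hdz'.
move: gu gw gz; rewrite !ltr_norml => /andP [gu1 gu2] /andP [gw1 gw2] /andP [gz1 gz2].
have k1 : t * G u' <= t * (G u + eps) by apply: ler_wpM2l => //; lra.
have k2 : (1 - t) * G w' <= (1 - t) * (G w + eps) by apply: ler_wpM2l; lra.
have k3 : t * (G y + dotv s (u - z)) <= t * G u' by apply: ler_wpM2l.
have k4 : (1 - t) * (G y + dotv s (w - z)) <= (1 - t) * G w' by apply: ler_wpM2l; lra.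
rewrite /eps in gz1 gz2 k1 k2.
nra.
Qed.

End F.


Section G.
Variables (R : realType) (n : nat).
Local Notation vec := 'rV[R]_n.

Lemma frechet_limiting (f : vec -> R) x v : frechet_subgrad f x v -> limiting_subgrad f x v.
Proof.
move=> h; exists (fun _ => x), (fun _ => v); split => // e e0; exists 0%N => j _.
by rewrite !subrr norm20 normr0; split.
Qed.

Lemma inv_le (j k : nat) : (j <= k)%N -> 1 / (k%:R + 1) <= 1 / (j%:R + 1) :> R.
Proof.
move=> hjk; rewrite ler_pdivrMr ?ltr_wpDl // mulrC mulrA mulr1 ler_pdivlMr ?ltr_wpDl //.
by rewrite mul1r lerD2r ler_nat.
Qed.

Lemma local_support (f : vec -> R) (ybar : vec) (B : R) :
  locally_lipschitz f -> prox_regular_at f ybar ->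
  exists k : nat, forall x v x', norm2 (x - ybar) < 1 / (k%:R + 1) ->
    frechet_subgrad f x v -> norm2 v <= B -> norm2 (x' - ybar) < 1 / (k%:R + 1) ->
    f x + dotv v (x' - x) - k%:R / 2 * norm2 (x' - x) ^+ 2 <= f x'.
Proof.
move=> hf hpr; apply: contrapT => H.
pose P k (t : vec * vec * vec) := [/\ norm2 (t.1.1 - ybar) < 1 / (k%:R + 1),
  frechet_subgrad f t.1.1 t.1.2, norm2 t.1.2 <= B, norm2 (t.2 - ybar) < 1 / (k%:R + 1) &
  f t.2 < f t.1.1 + dotv t.1.2 (t.2 - t.1.1) - k%:R / 2 * norm2 (t.2 - t.1.1) ^+ 2].
have H' : forall k, exists t, P k t.
  move=> k; apply: contrapT => nk; apply: H; exists k => x v x' h1 h2 h3 h4.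
  rewrite leNgt; apply/negP => hlt; apply: nk; by exists (x, v, x').
have [T hT] := @choice _ _ P H'.
pose xs j := (T j).1.1; pose vs j := (T j).1.2; pose xs' j := (T j).2.
have hB : forall j, norm2 (vs j) <= B by move=> j; case: (hT j).
have [phi [iphi [vstar hv]]] := @vBW R n vs B hB.
have closex : forall e, 0 < e -> exists N, forall j, (N <= j)%N ->
    norm2 (xs (phi j) - ybar) < e /\ norm2 (xs' (phi j) - ybar) < e.
  move=> e e0; have [N hN] := archi1 e0; exists N => j hj.
  have hphi : (N <= phi j)%N := leq_trans hj (incr_ge iphi j).
  have [h1 _ _ h4 _] := hT (phi j).
  by split; [apply: lt_trans h1 (hN _ hphi)|apply: lt_trans h4 (hN _ hphi)].
have closef : forall e, 0 < e -> exists N, forall j, (N <= j)%N ->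
    `|f (xs (phi j)) - f ybar| < e.
  move=> e e0; have [d d0 hd] := fcont hf ybar e0.
  have [N hN] := closex d d0; exists N => j hj; exact: hd (hN j hj).1.
have hlim : limiting_subgrad f ybar vstar.
  exists (xs \o phi), (vs \o phi); split; first by move=> j; case: (hT (phi j)).
  move=> e e0.
  have [N1 h1] := closex e e0; have [N2 h2] := closef e e0; have [N3 h3] := hv e e0.
  exists (maxn N1 (maxn N2 N3)) => j hj.
  rewrite !geq_max in hj; case/and3P: hj => j1 j2 j3.
  by split; [exact: (h1 j j1).1|exact: h2 j j2|exact: h3 j j3].
have [_ [eps [a [eps0 a0 hin]]]] := hpr.2 vstar hlim.
have [N1 h1] := closex eps eps0; have [N2 h2] := closef eps eps0.
have [N3 h3] := hv eps eps0; have [N4 h4] := archi2 a.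
set j := maxn N1 (maxn N2 (maxn N3 N4)).
have jj : (N1 <= j)%N /\ (N2 <= j)%N /\ (N3 <= j)%N /\ (N4 <= j)%N.
  by rewrite /j !leq_max !leqnn !orbT.
case: jj => j1 [j2 [j3 j4]].
have [hx hx'] := h1 j j1.
have hfx := h2 j j2.
have hvv := h3 j j3; rewrite /= in hvv.
have ha : a <= (phi j)%:R.
  apply: le_trans (h4 j j4) _; rewrite ler_nat; exact: incr_ge.
have hfr : frechet_subgrad f (xs (phi j)) (vs (phi j)) by case: (hT (phi j)).
have key := hin (xs (phi j)) (vs (phi j)) hx (frechet_limiting hfr) hvv.
have := ler_norm (f (xs (phi j)) - f ybar).
move=> hn; have {key} key := key ltac:(lra) (xs' (phi j)) hx'.
have [_ _ _ _ hviol] := hT (phi j).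
rewrite -/(xs (phi j)) -/(vs (phi j)) -/(xs' (phi j)) in hviol.
have q0 := sqr_ge0 (norm2 (xs' (phi j) - xs (phi j))).
move: key hviol q0 ha; set q := _ ^+ 2; set k := (phi j)%:R => key hviol q0 ha.
have : a / 2 * q <= k / 2 * q by apply: ler_wpM2r => //; lra.
lra.
Qed.

End G.


Section H.
Variables (R : realType) (n : nat).
Local Notation vec := 'rV[R]_n.

Lemma sqcont (c z : vec) (e : R) : 0 < e -> exists2 d, 0 < d &
  forall y, norm2 (y - z) < d -> `|norm2 (y - c) ^+ 2 - norm2 (z - c) ^+ 2| < e.
Proof.
move=> e0; set b := norm2 (z - c).
have b0 : 0 <= b := norm2_ge0 _.
have h22 : 0 < 2 * b + 2 by lra.
exists (Num.min 1 (e / (2 * b + 2))).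
  by rewrite lt_min ltr01 /= divr_gt0.
move=> y; rewrite lt_min => /andP [h1 h2].
move: h2; rewrite ltr_pdivlMr // => h2.
have e1 : (y - c) - (z - c) = y - z by apply/rowP => i; rewrite !mxE; ring.
have h3 := rev_tri (y - c) (z - c); rewrite e1 in h3.
have h4 : norm2 (y - c) <= norm2 (y - z) + b by have := norm2_tri y z c; rewrite -/b; lra.
have -> : norm2 (y - c) ^+ 2 - b ^+ 2 = (norm2 (y - c) - b) * (norm2 (y - c) + b) by ring.
rewrite normrM.
have := norm2_ge0 (y - c); have := norm2_ge0 (y - z).
move: h1 h2 h3 h4; set a := norm2 (y - c); set d := norm2 (y - z).
move=> h1 h2 h3 h4 hd ha.
rewrite (ger0_norm (_ : 0 <= a + b)); last by lra.
have : `|a - b| * (a + b) <= d * (a + b) by apply: ler_wpM2r; lra.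
nra.
Qed.

Lemma gcont (f : vec -> R) (c : vec) (a : R) : locally_lipschitz f ->
  forall z e, 0 < e -> exists2 d, 0 < d &
    forall y, norm2 (y - z) < d -> `|gfun f c a y - gfun f c a z| < e.
Proof.
move=> hf z e e0.
have e20 : 0 < e / 2 by rewrite divr_gt0 //; lra.
have [d1 d10 hd1] := fcont hf z e20.
have aa : 0 < `|a / 2| + 1 by rewrite ltr_wpDl.
have [d2 d20 hd2] := sqcont c z (divr_gt0 e20 aa).
exists (Num.min d1 d2); first by rewrite lt_min d10 d20.
move=> y; rewrite lt_min => /andP [h1 h2].
have k1 := hd1 y h1; have k2 := hd2 y h2.
move: k2; rewrite ltr_pdivlMr // => k2.
rewrite /gfun.
have -> : f y + a / 2 * norm2 (y - c) ^+ 2 - (f z + a / 2 * norm2 (z - c) ^+ 2)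
  = (f y - f z) + a / 2 * (norm2 (y - c) ^+ 2 - norm2 (z - c) ^+ 2) by ring.
apply: le_lt_trans (ler_normD _ _) _; rewrite normrM.
move: k1 k2; set A := `|f y - f z|; set Q := `|_ - _|; set aa2 := `|a / 2|.
move=> k1 k2.
have : aa2 * Q <= (aa2 + 1) * Q by apply: ler_wpM2r; [exact: normr_ge0|lra].
have : (aa2 + 1) * Q < e / 2 by rewrite mulrC.
lra.
Qed.

Lemma per_point (f : vec -> R) (m : R) (ybar : vec) :
  locally_lipschitz f -> (forall x, m <= f x) -> prox_regular_at f ybar ->
  exists2 r : R, 0 < r & exists a0 : R, forall a, a0 <= a -> forall c u w t,
    norm2 (u - ybar) < r -> norm2 (w - ybar) < r -> 0 <= t -> t <= 1 ->
    gfun f c a (t *: u + (1 - t) *: w) <= t * gfun f c a u + (1 - t) * gfun f c a w.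
Proof.
move=> hf hm hpr.
have [del0 d00 [L0 L00 hL0]] := lip_nonneg hf ybar.
have [k hk] := local_support (2 * L0) hf hpr.
pose r0 : R := 1 / (k%:R + 1).
have r00 : 0 < r0 by rewrite divr_gt0 // ltr_wpDl.
set r := Num.min r0 (del0 / 2).
have r_0 : 0 < r by rewrite lt_min r00 divr_gt0 //; lra.
have rr0 : r <= r0 by rewrite ge_min lexx.
have rd : r <= del0 / 2 by rewrite ge_min lexx orbT.
exists r => //; exists k%:R => a ha c.
apply: convex_from_support.
  by move=> z _; exact: gcont.
move=> z hz eta eta0.
have eta'0 : 0 < Num.min eta (r - norm2 (z - ybar)) by rewrite lt_min eta0 subr_gt0.
have [y [v [hyz hfr hv]]] := dense_frechet hm d00 L00 hL0 (lt_le_trans hz rd) eta'0.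
move: hyz; rewrite lt_min => /andP [hyz1 hyz2].
have hy : norm2 (y - ybar) < r by have := norm2_tri y z ybar; lra.
exists y, (v + a *: (y - c)); split => // x' hx'.
have := hk y v x' (lt_le_trans hy rr0) hfr hv (lt_le_trans hx' rr0).
rewrite /gfun.
have ex : x' - c = (x' - y) + (y - c) by rewrite addrA subrK.
rewrite ex (sqr_norm2D (x' - y) (y - c)) dotvDl dotvZl (dotvC (y - c)).
set q := norm2 (x' - y); set D := dotv (x' - y) (y - c); set w0 := norm2 (y - c).
have q0 := sqr_ge0 q.
move=> h.
have : k%:R / 2 * q ^+ 2 <= a / 2 * q ^+ 2 by apply: ler_wpM2r => //; lra.
nra.
Qed.

End H.

Unset Implicit Arguments. Set Strict Implicit.

Theorem lemma1 (R : realType) (n : nat) (f : 'rV[R]_n -> R) (x0 : 'rV[R]_n) :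
  locally_lipschitz f ->
  (exists m : R, forall x, m <= f x) ->
  (exists M : R, forall x, f x <= f x0 -> norm2 x <= M) ->
  (forall x, f x <= f x0 -> prox_regular_at f x) ->
  exists2 abar : R, 0 <= abar &
    forall a : R, abar <= a -> forall x y : 'rV[R]_n, f y <= f x0 ->
      convex_near (gfun f x a) y.
Proof.
move=> hf [m hm] [M hM] hpr.
apply: contrapT => H.
pose P (k : nat) (t : R * 'rV[R]_n * 'rV[R]_n) :=
  [/\ k%:R <= t.1.1, f t.2 <= f x0 & ~ convex_near (gfun f t.1.2 t.1.1) t.2].
have H' : forall k, exists t, P k t.
  move=> k; apply: contrapT => nk; apply: H; exists k%:R => // a ha x y hy.
  apply: contrapT => nc; apply: nk; by exists (a, x, y).
have [T hT] := @choice _ _ P H'.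
pose ys j := (T j).2.
have hB : forall j, norm2 (ys j) <= M by move=> j; case: (hT j) => _ h _; exact: hM.
have [phi [iphi [ystar hy]]] := vBW hB.
have ylev : f ystar <= f x0.
  apply/ler_addgt0Pr => e e0.
  have [d d0 hd] := fcont hf ystar e0.
  have [N hN] := hy d d0.
  have h1 := hd _ (hN N (leqnn N)).
  have [_ h2 _] := hT (phi N).
  rewrite /= -/(ys (phi N)) in h1 h2.
  have := ler_norm (f ystar - f (ys (phi N))); rewrite distrC in h1; lra.
have [r r0 [a0 ha0]] := per_point hf hm (hpr _ ylev).
have r20 : 0 < r / 2 by rewrite divr_gt0 //; lra.
have [N1 h1] := hy (r / 2) r20.
have [N2 h2] := archi2 a0.
set j := maxn N1 N2.
have hj1 := h1 j (leq_maxl _ _); rewrite /= in hj1.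
have hj2 := h2 j (leq_maxr _ _).
have [ha _ hnc] := hT (phi j).
apply: hnc; exists (r / 2) => // u w t hu hw t0 t1.
apply: ha0 => //.
- apply: le_trans hj2 (le_trans _ ha); rewrite ler_nat; exact: incr_ge.
- by have := norm2_tri u (ys (phi j)) ystar; rewrite -/(ys (phi j)) in hu; lra.
- by have := norm2_tri w (ys (phi j)) ystar; rewrite -/(ys (phi j)) in hw; lra.
Qed.
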